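(* Let $p$ be an odd prime and $b,c\in\mathbb Z$. Then $$\binom{p-1}{p-k}_{b,c}\equiv u_k(-b,c)\pmod p\qquad\text{for all } k=0,1,\ldots,p-1.$$
   Context: For $n\in\mathbb N$ and $b,c\in\mathbb Z$, the generalized trinomial coefficients $\binom{n}{k}_{b,c}$ ($k\in\mathbb Z$) are the integers defined by $\left(x+b+\frac{c}{x}\right)^n=\sum_{k\in\mathbb Z}\binom{n}{k}_{b,c}x^k$. For $A,B\in\mathbb Z$, the Lucas sequence $u_n=u_n(A,B)$ ($n\in\mathbb N$) is defined by $u_0=0$, $u_1=1$, and $u_{n+1}=Au_n-Bu_{n-1}$ for $n\ge1$. *)

(* Defs.v *)
From mathcomp Require Import all_boot all_order all_algebra.
Set Implicit Arguments. Unset Strict Implicit. Unset Printing Implicit Defensive.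
Import Order.TTheory GRing.Theory Num.Theory.
Local Open Scope ring_scope.

(* Generalized trinomial coefficient binom(n,k)_{b,c}: the coefficient of x^k in
   (x + b + c/x)^n.  Since x^n (x + b + c/x)^n = (x^2 + b x + c)^n, this is the
   coefficient of x^(n+k) in the polynomial (X^2 + b X + c)^n (0 if n+k < 0). *)
Definition gtrinom (n : nat) (k : int) (b c : int) : int :=
  match (n%:Z + k)%R with
  | Posz m => (('X^2 + b%:P * 'X + c%:P) ^+ n : {poly int})`_m
  | Negz _ => 0
  end.

Fixpoint lucas_u2 (A B : int) (n : nat) : int * int :=
  match n with
  | 0%N => (0, 1)
  | m.+1 => let '(x, y) := lucas_u2 A B m in (y, A * y - B * x)
  end.
Definition lucas_u (A B : int) (n : nat) : int := (lucas_u2 A B n).1.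

Lemma lucas_u_0 A B : lucas_u A B 0 = 0. Proof. by []. Qed.
Lemma lucas_u_1 A B : lucas_u A B 1 = 1. Proof. by []. Qed.
Lemma lucas_u_rec A B n :
  lucas_u A B n.+2 = A * lucas_u A B n.+1 - B * lucas_u A B n.
Proof. by rewrite /lucas_u /=; case: (lucas_u2 A B n). Qed.

(* Main.v *)
Require Import Defs.
From mathcomp Require Import all_boot all_order all_algebra.
From mathcomp Require Import zify.
Import Order.TTheory GRing.Theory Num.Theory.
Local Open Scope ring_scope.

Section Aux.
Variable p : nat.
Hypothesis pr : prime p.
Local Notation F := 'F_p.
Variables hb hc : F.
Let Q : {poly F} := 'X^2 + hb%:P * 'X + hc%:P.
Let P : {poly F} := Q ^+ p.-1.

Lemma Qp_coef n : (p < n < 2 * p)%N -> (Q ^+ p)`_n = 0.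
Proof.
move=> /andP[h1 h2].
have ch : ([char {poly F}]).-nat p by rewrite pnatE // pchar_poly pchar_Fp.
rewrite /Q !exprDn_pchar // -exprM exprMn -!rmorphXn !coefD coefXn coefCM coefXn coefC.
have -> : (n == 2 * p)%N = false by apply/negbTE; rewrite neq_ltn h2.
have -> : (n == p)%N = false by apply/negbTE; rewrite neq_ltn h1 orbT.
have -> : (n == 0)%N = false by apply/negbTE; rewrite -lt0n (leq_ltn_trans _ h1).
by rewrite mulr0 !addr0.
Qed.

Lemma Qp_top : (Q ^+ p)`_(2 * p) = 1.
Proof.
have ch : ([char {poly F}]).-nat p by rewrite pnatE // pchar_poly pchar_Fp.
have p0 : (0 < p)%N by rewrite prime_gt0.
rewrite /Q !exprDn_pchar // -exprM exprMn -!rmorphXn !coefD coefXn coefCM coefXn coefC.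
rewrite eqxx mul2n -addnn.
have -> : (p + p == p)%N = false by apply/negbTE; apply/eqP; lia.
have -> : (p + p == 0)%N = false by apply/negbTE; apply/eqP; lia.
by rewrite mulr0 !addr0.
Qed.

Lemma Qp_rec n : (Q ^+ p)`_n.+2 = P`_n + hb * P`_n.+1 + hc * P`_n.+2.
Proof.
have -> : Q ^+ p = P * Q.
  by rewrite /P -exprSr prednK // prime_gt0.
rewrite /Q !mulrDr !coefD coefMXn /= mulrA coefMX /= !coefMC.
by rewrite !subSS subn0 (mulrC hb) (mulrC hc).
Qed.

Lemma P_size : (size P <= (2 * p.-1).+1)%N.
Proof.
apply: leq_trans (size_poly_exp_leq _ _) _.
have hQ : (size Q <= 3)%N.
  rewrite /Q; apply: (leq_trans (size_polyD _ _)); rewrite geq_max.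
  rewrite size_polyC (leq_trans (leq_b1 _)) // andbT.
  apply: (leq_trans (size_polyD _ _)); rewrite geq_max size_polyXn /=.
  apply: (leq_trans (size_polyMleq _ _)); rewrite size_polyX size_polyC.
  by case: (hb != 0).
rewrite ltnS mulnC [X in (_ <= X)%N]mulnC leq_mul2l; apply/orP; right.
lia.
Qed.

End Aux.

Theorem lemma4p2 (p : nat) (b c : int) :
  prime p -> odd p ->
  forall k : nat, (k <= p.-1)%N ->
    (gtrinom p.-1 (p%:Z - k%:Z) b c = lucas_u (- b) c k %[mod p%:Z])%Z.
Proof.
move=> pr _ k hk.
have p2 : (1 < p)%N by rewrite prime_gt1.
rewrite /gtrinom.
have -> : (p.-1%:Z + (p%:Z - k%:Z))%R = Posz (p.-1 + p - k)%N by lia.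
apply/eqP; rewrite eqz_mod_dvd (dvdz_pcharf (pchar_Fp pr)) rmorphB subr_eq0; apply/eqP.
set hb : 'F_p := b%:~R; set hc : 'F_p := c%:~R.
set Q : {poly 'F_p} := 'X^2 + hb%:P * 'X + hc%:P.
set P := Q ^+ p.-1.
have hmap : forall m, ((('X^2 + b%:P * 'X + c%:P) ^+ p.-1 : {poly int})`_m)%:~R = P`_m :> 'F_p.
  move=> m; rewrite -(coef_map (intmul 1)) rmorphXn /= !rmorphD /= map_polyXn rmorphM /=.
  by rewrite map_polyX !map_polyC.
apply: (etrans (hmap _)).
set u := fun n => (lucas_u (- b) c n)%:~R : 'F_p.
have urec : forall n, u n.+2 = - hb * u n.+1 - hc * u n.
  by move=> n; rewrite /u lucas_u_rec rmorphB !rmorphM /= rmorphN.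
have Psz := @P_size p pr hb hc.
have Pz : forall m, (2 * p.-1 < m)%N -> P`_m = 0.
  by move=> m hm; rewrite nth_default //; apply: leq_trans Psz hm.
have key : forall n, (n.+1 <= p.-1)%N ->
    P`_(p.-1 + p - n) = u n /\ P`_(p.-1 + p - n.+1) = u n.+1.
  elim=> [|n IH] hn.
    split.
      by rewrite Pz ?rmorph0 //; lia.
    have := @Qp_rec p pr hb hc (p.-1 + p - 1).
    have t : (Q ^+ p)`_((p.-1 + p - 1).+2) = 1.
      have -> : (p.-1 + p - 1).+2 = (2 * p)%N by lia.
      exact: Qp_top.
    rewrite t -/Q -/P (Pz (p.-1 + p - 1).+1) ?(Pz (p.-1 + p - 1).+2); try lia.
    by rewrite !mulr0 !addr0 /u /= => <-.
  have [h1 h2] := IH (ltnW hn); split=> //.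
  have := @Qp_rec p pr hb hc (p.-1 + p - n.+2).
  rewrite (@Qp_coef p pr hb hc); last by apply/andP; split; lia.
  have -> : (p.-1 + p - n.+2).+2 = (p.-1 + p - n)%N by lia.
  have -> : (p.-1 + p - n.+2).+1 = (p.-1 + p - n.+1)%N by lia.
  rewrite -/Q -/P h1 h2 urec => /eqP; rewrite eq_sym -addrA addr_eq0 => /eqP ->.
  by rewrite opprD mulNr.
case: k hk => [|k] hk.
  by case: (key 0%N ltac:(lia)); rewrite subn0 => ->.
by case: (key k hk) => _ ->.
Qed.
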